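(* For all positive integers $\rho$ and $v$ (for which $\beta(\rho,v,4)$ is defined), \[ \beta(\rho,v,4) \le \rho\left( (8\rho - 7) + \max\left\{ 12, \left\lfloor \frac{v-4\rho}{3} \right\rfloor \right\} \right). \]
   Context: For integers $v \ge k \ge 2$, a $(v,k)$-packing is a pair $(X,\mathcal{B})$ where $X$ is a set of $v$ points and $\mathcal{B}$ is a set of $k$-subsets of $X$ (blocks) such that every pair of distinct points lies in at most one block. A partial parallel class (PPC) is a set of pairwise disjoint blocks; its size is the number of blocks. A PPC of size $\rho$ is maximum if the packing has no PPC of size $\rho+1$. $\beta(\rho,v,k)$ denotes the maximum number of blocks in a $(v,k)$-packing in which the maximum PPC has size $\rho$. *)

(* Defs.v *)
From mathcomp Require Import all_boot.
Set Implicit Arguments. Unset Strict Implicit. Unset Printing Implicit Defensive.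

Section Packing.
Variable v : nat.

Definition is_packing (k : nat) (B : {set {set 'I_v}}) : bool :=
  [forall b in B, #|b| == k] &&
  [forall x : 'I_v, forall y : 'I_v,
     (x != y) ==> (#|[set b in B | (x \in b) && (y \in b)]| <= 1)].

Definition is_ppc (B P : {set {set 'I_v}}) : bool :=
  (P \subset B) &&
  [forall b1 in P, forall b2 in P, (b1 != b2) ==> [disjoint b1 & b2]].

Definition max_ppc_size (B : {set {set 'I_v}}) (rho : nat) : bool :=
  [exists P, is_ppc B P && (#|P| == rho)] &&
  ~~ [exists P, is_ppc B P && (#|P| == rho.+1)].

Definition admissible (rho k : nat) (B : {set {set 'I_v}}) : bool :=
  is_packing k B && max_ppc_size B rho.

End Packing.

(* beta(rho,v,k): maximum number of blocks of a (v,k)-packing whose maximum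
   PPC has size rho (equals 0 when no such packing exists; see
   beta_defined). *)
Definition beta (rho v k : nat) : nat :=
  \max_(B : {set {set 'I_v}} | admissible rho k B) #|B|.

Definition beta_defined (rho v k : nat) : Prop :=
  exists B : {set {set 'I_v}}, admissible rho k B.

(* Main.v *)
Require Import Defs.
From mathcomp Require Import all_boot zify.
Set Implicit Arguments. Unset Strict Implicit. Unset Printing Implicit Defensive.

Lemma disjP (T : finType) (A B : {set T}) :
  reflect (forall x, x \in A -> x \in B -> False) [disjoint A & B].
Proof.
rewrite -setI_eq0; apply: (iffP eqP) => [H x xa xb | H].
  have: x \in A :&: B by rewrite inE xa xb.
  by rewrite H inE.
apply/setP => x; rewrite !inE; apply/negP => /andP[xa xb]; exact: H x xa xb.
Qed.

Lemma ndisjP (T : finType) (A B : {set T}) :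
  reflect (exists2 x, x \in A & x \in B) (~~ [disjoint A & B]).
Proof.
apply: (iffP negP) => [H | [x xa xb] /disjP H]; last exact: H x xa xb.
case: (boolP (A :&: B == set0)) => [h | /set0Pn [x]].
  by exfalso; apply: H; rewrite -setI_eq0.
by rewrite inE => /andP[]; exists x.
Qed.

Lemma pick_in (T : finType) (S : {set T}) d : S != set0 -> odflt d [pick z in S] \in S.
Proof.
case: pickP => [z zS|H] //= /set0Pn[z zS]; by have := H z; rewrite zS.
Qed.

Lemma double_count (T1 T2 : finType) (C : {set T1}) (A : {set T2}) (R : T1 -> T2 -> bool) :
  \sum_(b in C) #|[set x in A | R b x]| = \sum_(x in A) #|[set b in C | R b x]|.
Proof.
have E : forall (T : finType) (S : {set T}) (Q : T -> bool),
   #|[set x in S | Q x]| = \sum_(x in S) (if Q x then 1 else 0).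
  move=> T S Q; rewrite -sum1_card -big_mkcondr; apply: eq_bigl => x; by rewrite inE.
under eq_bigr => b _ do rewrite E.
rewrite exchange_big /=; apply: eq_bigr => x _; by rewrite E.
Qed.

Lemma packP v k (B : {set {set 'I_v}}) : is_packing k B ->
  forall b1 b2 x y, b1 \in B -> b2 \in B -> x != y -> x \in b1 -> y \in b1 ->
  x \in b2 -> y \in b2 -> b1 = b2.
Proof.
move=> /andP[_ /forallP H] b1 b2 x y h1 h2 xy x1 y1 x2 y2.
move: (H x) => /forallP/(_ y); rewrite xy /= => /card_le1_eqP; apply; by rewrite inE ?h1 ?h2 ?x1 ?x2 ?y1 ?y2.
Qed.

Lemma packsz v k (B : {set {set 'I_v}}) : is_packing k B -> forall b, b \in B -> #|b| = k.
Proof. by move=> /andP[/forallP H _] b bB; move: (H b); rewrite bB => /eqP. Qed.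

Lemma ppcP v (B P : {set {set 'I_v}}) :
  reflect (P \subset B /\ {in P &, forall b1 b2 : {set 'I_v}, b1 != b2 -> [disjoint b1 & b2]}) (is_ppc B P).
Proof.
apply: (iffP andP) => [[h /forallP H]|[h H]]; split => //.
  move=> b1 b2 i1 i2; move: (H b1); rewrite i1 /= => /forallP/(_ b2); rewrite i2 /= => /implyP; exact.
apply/forallP => b1; apply/implyP => i1; apply/forallP => b2; apply/implyP => i2; apply/implyP; exact: H.
Qed.

Lemma ar1 a c : 0 < a -> a + c = 4 -> c <= 3. Proof. lia. Qed.
Lemma ar2 a c : a <= 1 -> a + c = 4 -> 3 <= c. Proof. lia. Qed.
Lemma ar3 a c v : a + c = v -> v - a = c. Proof. lia. Qed.

Lemma bound_B v rho (B : {set {set 'I_v}}) : 0 < rho -> admissible rho 4 B ->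
  #|B| <= rho * ((8 * rho - 7) + maxn 12 ((v - 4 * rho) %/ 3)).
Proof.
move=> rho0 /andP[pk /andP[/existsP[P /andP[ppc /eqP cP]] nop]].
move/ppcP: ppc => [PB Pdisj].
have bsz := packsz pk.
have pair := packP pk.
set U := cover P.
have tP : trivIset P by apply/trivIsetP.
have cU : #|U| = 4 * rho.
  move: tP; rewrite /trivIset => /eqP <-.
  rewrite (eq_bigr (fun _ => 4)); first by rewrite sum_nat_const cP mulnC.
  move=> p pP; apply: bsz; exact: (subsetP PB).
have pU : forall p, p \in P -> p \subset U by move=> p pP; exact: bigcup_sup.
have xU : forall x, x \in U -> exists2 p, p \in P & x \in p by move=> x /bigcupP.
have noext : forall P', is_ppc B P' -> #|P'| = rho.+1 -> False.
  move=> P' h1 h2; move/negP: nop; apply; apply/existsP; exists P'; by rewrite h1 h2 eqxx.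
have add : forall b, b \in B -> b \notin P -> [disjoint b & U] -> False.
  move=> b bB bP dU; apply: (noext (b |: P)); last by rewrite cardsU1 bP cP.
  apply/ppcP; split.
    by rewrite subUset sub1set bB PB.
  move=> b1 b2; rewrite !inE => /orP[/eqP->|i1] /orP[/eqP->|i2]; rewrite ?eqxx //.
  - move=> _; apply: disjointWr dU; exact: pU.
  - move=> _; rewrite disjoint_sym; apply: disjointWr dU; exact: pU.
  - exact: Pdisj.
have swap : forall b b' p, b \in B -> b' \in B -> b \notin P -> b' \notin P ->
    [disjoint b & b'] -> p \in P -> b :&: U \subset p -> b' :&: U \subset p -> False.
  move=> b b' p bB bB' bP bP' dbb pP sb sb'.
  have bnb : b != b'.
    apply/eqP => e; move: dbb; rewrite -e -setI_eq0 setIid => /eqP b0.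
    by move: (bsz b bB); rewrite b0 cards0.
  have gen : forall c q, c :&: U \subset p -> q \in P :\ p -> [disjoint c & q].
    move=> c q sc; rewrite !inE => /andP[qp qP]; apply/disjP => z zc zq.
    have zp : z \in p by apply: (subsetP sc); rewrite inE zc (subsetP (pU q qP)).
    by move/disjP: (Pdisj q p qP pP qp) => /(_ z zq zp).
  apply: (noext ((P :\ p) :|: [set b; b'])).
    apply/ppcP; split.
      rewrite subUset; apply/andP; split; first by apply: subset_trans PB; apply: subD1set.
      by apply/subsetP => z; rewrite !inE => /orP[]/eqP->.
    move=> b1 b2; rewrite !inE => /orP[i1|/orP[]/eqP->] /orP[i2|/orP[]/eqP->]; rewrite ?eqxx //.
    - by move=> ne; apply: Pdisj ne; [move: i1|move: i2]; case/andP.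
    - by move=> _; rewrite disjoint_sym; apply: gen sb _; rewrite !inE.
    - by move=> _; rewrite disjoint_sym; apply: gen sb' _; rewrite !inE.
    - by move=> _; apply: gen sb _; rewrite !inE.
    - by move=> _; apply: gen sb' _; rewrite !inE.
    - by move=> _; rewrite disjoint_sym.
  rewrite cardsU cards2 bnb.
  have -> : (P :\ p) :&: [set b; b'] = set0.
    apply/setP => z; rewrite !inE; apply/negP => /andP[/andP[_ zP] /orP[]/eqP e].
      by move: bP; rewrite -e zP.
    by move: bP'; rewrite -e zP.
  rewrite cards0 subn0; move: (cardsD1 p P); rewrite pP cP /= => ->; by rewrite addn2.
set M := maxn 12 ((v - 4 * rho) %/ 3).
set B2 := [set b in B :\: P | 1 < #|b :&: U|].
set B1 := [set b in B :\: P | #|b :&: U| <= 1].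
have hsplit : #|B| <= #|P| + #|B2| + #|B1|.
  have e1 : #|B| = #|P| + #|B :\: P|.
    rewrite cardsD (setIidPr PB); have := subset_leq_card PB; lia.
  have s1 : B :\: P \subset B2 :|: B1.
    apply/subsetP => b bB; rewrite !inE; move: bB; rewrite !inE => ->.
    by case: ltnP.
  have := subset_leq_card s1; have := leq_card_setU B2 B1; case=> h _; lia.
have h2 : #|B2| * 2 <= 4 * rho * (4 * rho - 4).
  have step1 : #|B2| * 2 <= \sum_(b in B2) #|[set x in U | x \in b]|.
    rewrite -sum_nat_const; apply: leq_sum => b; rewrite inE => /andP[_ hb].
    have -> : [set x in U | x \in b] = b :&: U by apply/setP => x; rewrite !inE andbC.
    exact: hb.
  apply: (leq_trans step1); rewrite (double_count B2 U (fun b x => x \in b)).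
  rewrite -cU -sum_nat_const; apply: leq_sum => x xU'.
  have [p pP xp] := xU x xU'.
  set D := [set b in B2 | x \in b].
  pose g b := odflt x [pick y in (b :&: U) :\: p].
  have gin : forall b, b \in D -> g b \in (b :&: U) :\: p.
    move=> b /setIdP[/setIdP[/setDP[bB bP] hb] xb].
    rewrite /g; apply: pick_in; apply/set0Pn.
    move: (cardsD1 x (b :&: U)); rewrite inE xb xU' /= => e.
    have : 0 < #|(b :&: U) :\ x| by move: hb; rewrite e add1n ltnS.
    rewrite card_gt0 => /set0Pn[y]; rewrite !inE => /andP[yx /andP[yb yU]].
    exists y; rewrite !inE yb yU; apply/andP; split => //; apply/negP => yp.
    have e2 := pair b p y x bB (subsetP PB p pP) yx yb xb yp xp.
    by move: bP; rewrite e2 pP.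
  have ginj : {in D &, injective g}.
    move=> b1 b2 h1 h2 e.
    have := gin b1 h1; have := gin b2 h2; rewrite -e !inE.
    move=> /andP[yp /andP[y2 _]] /andP[_ /andP[y1 _]].
    move: h1 h2; rewrite !inE => /andP[/andP[/andP[_ b1B] _] x1] /andP[/andP[/andP[_ b2B] _] x2].
    apply: (pair b1 b2 (g b1) x b1B b2B) => //.
    by apply/eqP => ex; move: yp; rewrite ex xp.
  rewrite -(card_in_imset ginj).
  have -> : #|U| - 4 = #|U :\: p|.
    by rewrite cardsD (setIidPr (pU p pP)) (bsz p (subsetP PB p pP)).
  apply: subset_leq_card; apply/subsetP => z /imsetP[b bD ->].
  move: (gin b bD); rewrite !inE => /andP[-> /andP[_ ->]] //.
have h1 : #|B1| <= rho * M.
  have step1 : #|B1| <= \sum_(b in B1) #|[set p in P | ~~ [disjoint b & p]]|.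
    rewrite -sum1_card; apply: leq_sum => b /setIdP[/setDP[bB bP] _].
    have : ~~ [disjoint b & U] by apply/negP => d; exact: add b bB bP d.
    case/ndisjP => z zb zU; have [p pP zp] := xU z zU.
    rewrite card_gt0; apply/set0Pn; exists p; rewrite inE pP /=.
    by apply/ndisjP; exists z.
  apply: (leq_trans step1); rewrite (double_count B1 P (fun b p => ~~ [disjoint b & p])).
  rewrite -cP -sum_nat_const; apply: leq_sum => p pP.
  set C := [set b in B1 | ~~ [disjoint b & p]].
  have pU' := pU p pP.
  have Cprop : forall b, b \in C -> [/\ b \in B, b \notin P, #|b :&: U| <= 1 & exists2 x, x \in b & x \in p].
    move=> b /setIdP[/setIdP[/setDP[bB bP] hb] /ndisjP[x xb xp]]; split => //; by exists x.
  have uniqU : forall b y z, b \in C -> y \in b -> z \in b -> y \in U -> z \in U -> y = z.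
    move=> b y z /Cprop[_ _ hb _] yb zb yU zU; move/card_le1_eqP: hb; apply; by rewrite inE ?yb ?zb ?yU ?zU.
  have subp : forall b, b \in C -> b :&: U \subset p.
    move=> b bC; have [_ _ _ [x xb xp]] := Cprop b bC.
    apply/subsetP => y; rewrite inE => /andP[yb yU].
    by rewrite (uniqU b y x bC yb xb yU (subsetP pU' x xp)).
  case: (boolP [exists x in p, 3 < #|[set b in C | x \in b]|]).
    case/existsP => x /andP[xp hD].
    set D := [set b in C | x \in b].
    have xU' : x \in U := subsetP pU' x xp.
    have allx : forall b', b' \in C -> x \in b'.
      move=> b' b'C; apply/negPn/negP => xb'.
      have [b'B b'P hb' [x' x'b x'p]] := Cprop b' b'C.
      pose f b := odflt x [pick z in b :&: b'].
      have fin : forall b, b \in D -> f b \in b :&: b'.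
        move=> b /setIdP[bC xb]; rewrite /f; apply: pick_in.
        rewrite setI_eq0; apply/negP => d.
        have [bB bP _ _] := Cprop b bC.
        exact: (swap b b' p bB b'B bP b'P d pP (subp b bC) (subp b' b'C)).
      have fx : forall b, b \in D -> f b != x.
        move=> b bD; have := fin b bD; rewrite inE => /andP[_ h].
        by apply/eqP => e; move: xb'; rewrite -e h.
      have finj : {in D &, injective f}.
        move=> b1 b2 k1 k2 e.
        have := fin b1 k1; have := fin b2 k2; rewrite -e !inE => /andP[z2 _] /andP[z1 _].
        move: (k1) (k2) => /setIdP[/Cprop[b1B _ _ _] x1] /setIdP[/Cprop[b2B _ _ _] x2].
        exact: (pair b1 b2 (f b1) x b1B b2B (fx b1 k1)).
      have fsub : f @: D \subset b' :\: U.
        apply/subsetP => z /imsetP[b bD ->].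
        have := fin b bD; rewrite inE => /andP[k1 k2].
        rewrite inE k2 andbT; apply/negP => hU.
        have := fx b bD; move: bD => /setIdP[bC xb].
        by rewrite (uniqU b (f b) x bC k1 xb hU xU') eqxx.
      have c3 : #|b' :\: U| <= 3.
        have := cardsID U b'; rewrite (bsz b' b'B).
        have : 0 < #|b' :&: U|.
          rewrite card_gt0; apply/set0Pn; exists x'; by rewrite inE x'b (subsetP pU' x' x'p).
        move=> h0 e; exact: ar1 h0 e.
      have := leq_trans (subset_leq_card fsub) c3; rewrite (card_in_imset finj) => h.
      by move: hD; rewrite ltnNge h.
    have step2 : #|C| * 3 <= \sum_(b in C) #|[set w in ~: U | w \in b]|.
      rewrite -sum_nat_const; apply: leq_sum => b bC.
      have -> : [set w in ~: U | w \in b] = b :\: U by apply/setP => w; rewrite !inE andbC.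
      have [bB _ hb _] := Cprop b bC.
      have := cardsID U b; rewrite (bsz b bB) => e; exact: ar2 hb e.
    have step3 : \sum_(b in C) #|[set w in ~: U | w \in b]| <= v - 4 * rho.
      rewrite (double_count C (~: U) (fun b w => w \in b)).
      have -> : v - 4 * rho = \sum_(w in ~: U) 1.
        rewrite sum1_card; have := cardsC U; rewrite card_ord cU; exact: ar3.
      apply: leq_sum => w; rewrite inE => wU.
      apply/card_le1_eqP => b1 b2 /setIdP[b1C w1] /setIdP[b2C w2].
      have [b1B _ _ _] := Cprop b1 b1C; have [b2B _ _ _] := Cprop b2 b2C.
      apply: (pair b2 b1 x w b2B b1B) => //; try exact: allx.
      by apply/eqP => e; move: wU; rewrite -e xU'.
    have : #|C| <= (v - 4 * rho) %/ 3 by rewrite leq_divRL //; exact: leq_trans step2 step3.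
    move=> h; apply: leq_trans h _; exact: leq_maxr.
  move=> nE.
  have H3 : forall x, x \in p -> #|[set b in C | x \in b]| <= 3.
    move=> x xp; rewrite leqNgt; apply/negP => h; move/negP: nE; apply.
    by apply/existsP; exists x; rewrite xp h.
  have step2 : #|C| <= \sum_(b in C) #|[set x in p | x \in b]|.
    rewrite -sum1_card; apply: leq_sum => b bC.
    have [_ _ _ [x xb xp]] := Cprop b bC.
    by rewrite card_gt0; apply/set0Pn; exists x; rewrite inE xp xb.
  apply: (leq_trans step2); rewrite (double_count C p (fun b x => x \in b)).
  apply: (@leq_trans (\sum_(x in p) 3)); first exact: leq_sum.
  rewrite sum_nat_const (bsz p (subsetP PB p pP)); exact: leq_maxl.
have [r er] : exists r, rho = r.+1 by exists rho.-1; lia.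
move: h1 h2 hsplit; rewrite cP /M er => h1 h2 hs.
set m := maxn _ _ in h1 *. nia.
Qed.

Theorem theorem3p2 (rho v : nat) :
  0 < rho -> 0 < v -> beta_defined rho v 4 ->
  beta rho v 4 <= rho * ((8 * rho - 7) + maxn 12 ((v - 4 * rho) %/ 3)).
Proof.
move=> rho0 _ _; rewrite /beta; apply/bigmax_leqP => B hB; exact: bound_B.
Qed.
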